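(* Let $\delta\in(0,\frac14]$ and let $h:[0,\delta]\to\mathbb{R}$ be continuous with $h(0)=0$ and $h(\delta)=1$. Then there exist $\bar r\in(0,\delta)$ and a smooth function $l:[0,\delta]\to\mathbb{R}$ such that $h-l$ attains a local minimum at $\bar r$ and $$l'(\bar r)\geq\frac{1}{4\delta}\qquad\text{and}\qquad \frac{l''(\bar r)}{1+(l'(\bar r))^2}\geq -2\,l'(\bar r).$$ *)

(* Defs.v *)
From Stdlib Require Import Reals.
From Coquelicot Require Import Coquelicot.
Open Scope R_scope.

Definition smooth (f : R -> R) : Prop :=
  forall (n : nat) (x : R), ex_derive_n f n x.

Definition continuous_on_Icc (f : R -> R) (a b : R) : Prop :=
  forall x, a <= x <= b ->
    filterlim f (within (fun y => a <= y <= b) (locally x)) (locally (f x)).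

Definition local_min_on_Icc (g : R -> R) (a b r : R) : Prop :=
  exists eps : R, 0 < eps /\
    forall x, a <= x <= b -> Rabs (x - r) < eps -> g r <= g x.

(* Main.v *)
Require Import Defs.
From Stdlib Require Import Reals.
From Coquelicot Require Import Coquelicot.
From Stdlib Require Import Lra Psatz Classical FunctionalExtensionality.
Open Scope R_scope.

Definition quadP (A p q r : R) (n : nat) (x : R) : R :=
  match n with
  | 0%nat => A + p*(x-r) + q/2*(x-r)^2
  | 1%nat => p + q*(x-r)
  | 2%nat => q
  | _ => 0
  end.

Lemma quad_derive (A p q r : R) (n : nat) (x : R) :
  is_derive (quadP A p q r n) x (quadP A p q r (S n) x).
Proof.
  destruct n as [|[|[|n]]]; unfold quadP.
  - auto_derive; auto. field.
  - auto_derive; auto. ring.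
  - auto_derive; auto.
  - auto_derive; auto.
Qed.

Lemma quad_Derive_n (A p q r : R) (n : nat) :
  forall x, Derive_n (quadP A p q r 0) n x = quadP A p q r n x.
Proof.
  induction n as [|n IH]; intro x.
  - reflexivity.
  - simpl. rewrite (Derive_ext _ (quadP A p q r n) x IH).
    apply is_derive_unique. apply quad_derive.
Qed.

Lemma quad_smooth (A p q r : R) : smooth (quadP A p q r 0).
Proof.
  intros n x. destruct n as [|n]; simpl; [exact I|].
  apply (ex_derive_ext (quadP A p q r n)).
  - intro t. symmetry. apply quad_Derive_n.
  - eexists. apply quad_derive.
Qed.

Lemma sqrt_lower (u y : R) : 0 < u -> u/4 < y ->
  sqrt u + (y-u)/(2*sqrt u) - 2/9*(y-u)^2/(sqrt u)^3 <= sqrt y.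
Proof.
  intros Hu Hy.
  assert (Hs : 0 < sqrt u) by (apply sqrt_lt_R0; lra).
  assert (Hy0 : 0 <= y) by lra.
  assert (Hu2 : sqrt u * sqrt u = u) by (apply sqrt_sqrt; lra).
  assert (Hy2 : sqrt y * sqrt y = y) by (apply sqrt_sqrt; lra).
  assert (Ha : 0 <= sqrt y) by apply sqrt_pos.
  assert (Hsa : sqrt u <= 2 * sqrt y).
  { destruct (Rle_lt_dec (sqrt u) (2 * sqrt y)) as [h|h]; [exact h|].
    exfalso. assert ((2*sqrt y)*(2*sqrt y) < sqrt u * sqrt u)
      as HH by (apply Rmult_le_0_lt_compat; lra).
    replace ((2*sqrt y)*(2*sqrt y)) with (4*(sqrt y*sqrt y)) in HH by ring.
    rewrite Hy2, Hu2 in HH. lra. }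
  set (s := sqrt u) in *. set (a := sqrt y) in *.
  rewrite <- Hu2, <- Hy2.
  assert (E : a - (s + (a*a - s*s)/(2*s) - 2/9*(a*a-s*s)^2/s^3)
             = (a-s)^2 * (2/9*(a+s)^2 - s^2/2) / s^3) by (field; lra).
  assert (0 <= (a-s)^2 * (2/9*(a+s)^2 - s^2/2) / s^3).
  { apply Rmult_le_pos.
    - assert (H3 : (3/2*s)*(3/2*s) <= (a+s)*(a+s))
        by (apply Rmult_le_compat; lra).
      apply Rmult_le_pos; [apply pow2_ge_0|].
      replace (2/9*(a+s)^2 - s^2/2) with (2/9*((a+s)*(a+s)) - 1/2*(s*s)) by field.
      replace ((3/2*s)*(3/2*s)) with (9/4*(s*s)) in H3 by field. lra.
    - left. apply Rinv_0_lt_compat. apply pow_lt. exact Hs. }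
  lra.
Qed.

Definition clamp (d x : R) : R := Rmin d (Rmax 0 x).

Lemma clamp_facts (d x c : R) : 0 < d -> 0 <= c <= d ->
  0 <= clamp d x <= d /\ Rabs (clamp d x - c) <= Rabs (x - c).
Proof.
  intros Hd Hc. unfold clamp, Rmin, Rmax.
  destruct (Rle_dec 0 x); destruct (Rle_dec d _);
  unfold Rabs; repeat destruct Rcase_abs; lra.
Qed.

Lemma clamp_id (d x : R) : 0 <= x <= d -> clamp d x = x.
Proof.
  intros H. unfold clamp, Rmin, Rmax.
  destruct (Rle_dec 0 x); destruct (Rle_dec d _); lra.
Qed.

Lemma hcont (delta : R) (h : R -> R) : continuous_on_Icc h 0 delta ->
  forall c, 0 <= c <= delta -> forall eps, 0 < eps -> exists a, 0 < a /\
   forall y, 0 <= y <= delta -> Rabs (y - c) < a -> Rabs (h y - h c) < eps.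
Proof.
  intros Hc c Hcc eps He.
  destruct (proj1 (filterlim_locally _ _) (Hc c Hcc) (mkposreal eps He)) as [a Ha].
  exists a. split; [apply cond_pos|].
  intros y Hy Hya. exact (Ha y Hya Hy).
Qed.

Lemma hclamp_cont (delta : R) (h : R -> R) : 0 < delta -> continuous_on_Icc h 0 delta ->
  forall c, 0 <= c <= delta -> continuity_pt (fun y => h (clamp delta y)) c.
Proof.
  intros Hd Hc c Hcc.
  unfold continuity_pt, continue_in, limit1_in, limit_in.
  intros eps He. destruct (hcont delta h Hc c Hcc eps He) as [a [Ha Hy]].
  exists a. split; [exact Ha|]. intros y [_ Hya].
  simpl in *. unfold R_dist in *.
  destruct (clamp_facts delta y c Hd Hcc) as [H1 H2].
  rewrite (clamp_id delta c Hcc).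
  apply Hy; [exact H1|lra].
Qed.

Theorem lemma2p5 (delta : R) (h : R -> R) :
  0 < delta -> delta <= 1/4 ->
  continuous_on_Icc h 0 delta -> h 0 = 0 -> h delta = 1 ->
  exists (rbar : R) (l : R -> R),
    0 < rbar < delta /\
    smooth l /\
    local_min_on_Icc (fun x => h x - l x) 0 delta rbar /\
    Derive l rbar >= 1 / (4 * delta) /\
    Derive_n l 2 rbar / (1 + (Derive l rbar)^2) >= - 2 * Derive l rbar.
Proof.
  intros Hd Hd4 Hc H0 H1.
  set (sd := sqrt delta).
  assert (Hsd : 0 < sd) by (apply sqrt_lt_R0; lra).
  assert (Hsd2 : sd * sd = delta) by (apply sqrt_sqrt; lra).
  assert (Hsd4 : sd <= 1/2) by nra.
  set (k := 3 / (4 * sd)).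
  assert (Hk : k * sd = 3/4) by (unfold k; field; lra).
  assert (Hk1 : 3/2 <= k).
  { assert (0 < k) by (unfold k; apply Rdiv_lt_0_compat; lra). nra. }
  destruct (hcont delta h Hc 0 ltac:(lra) (1/4) ltac:(lra)) as [a [Ha Hha]].
  set (tau := Rmin (a/2) (delta/2)).
  assert (Htau : 0 < tau /\ tau < delta /\ tau < a).
  { unfold tau, Rmin; destruct Rle_dec; lra. }
  assert (Hsmall : forall t, 0 <= t <= tau -> h t < 1/4).
  { intros t Ht. specialize (Hha t ltac:(lra)).
    rewrite H0, Rminus_0_r, Rminus_0_r in Hha.
    assert (Rabs t < a) by (rewrite Rabs_right; lra).
    specialize (Hha H). apply Rabs_def2 in Hha. lra. }
  destruct (classic (exists t x, 0 <= t <= tau /\ t < x <= delta /\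
                       h x < h t + k * sqrt (x - t)))
    as [[t [x [Ht [Hx Hlt]]]] | Hno].
  - assert (Hkpos : 0 < k) by lra.
    set (F := fun y => h (clamp delta y) - k * sqrt (y - t)).
    assert (Hcont : forall c, t <= c <= delta -> continuity_pt F c).
    { intros c Hc0. unfold F.
      apply (continuity_pt_minus (fun y => h (clamp delta y)) (fun y => k * sqrt (y - t))).
      - apply hclamp_cont; auto; lra.
      - apply (continuity_pt_mult (fun _ => k) (fun y => sqrt (y - t))).
        + apply continuity_pt_const. intros ? ?. reflexivity.
        + apply (continuity_pt_comp (fun y => y - t) sqrt c).
          * apply (continuity_pt_minus (fun y => y) (fun _ => t)).
            -- apply continuity_pt_id.
            -- apply continuity_pt_const. intros ? ?. reflexivity.
          * apply continuity_pt_sqrt. lra. }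
    destruct (continuity_ab_min F t delta ltac:(lra) Hcont) as [r [Hmin Hr]].
    assert (Ft : F t = h t).
    { unfold F. rewrite clamp_id by lra. rewrite Rminus_diag, sqrt_0. ring. }
    assert (Fx : F x < h t).
    { unfold F. rewrite clamp_id by lra. lra. }
    assert (Hsdt : sqrt (delta - t) <= sd) by (apply sqrt_le_1_alt; lra).
    assert (Fd : F delta >= 1/4).
    { unfold F. rewrite clamp_id by lra. rewrite H1. nra. }
    assert (Htsm : h t < 1/4) by (apply Hsmall; lra).
    assert (HFr1 := Hmin x ltac:(lra)).
    assert (HFr2 := Hmin t ltac:(lra)).
    assert (HFr3 := Hmin delta ltac:(lra)).
    assert (Hrt : t < r).
    { destruct (Req_dec r t) as [E|E]; [subst r; lra | lra]. }
    assert (Hrd : r < delta).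
    { destruct (Req_dec r delta) as [E|E]; [rewrite E in *; lra | lra]. }
    set (u := r - t).
    assert (Hu : 0 < u) by (unfold u; lra).
    set (s := sqrt u).
    assert (Hs : 0 < s) by (apply sqrt_lt_R0; lra).
    assert (Hs2 : s * s = u) by (apply sqrt_sqrt; lra).
    assert (Hssd : s <= sd) by (apply sqrt_le_1_alt; unfold u; lra).
    set (p := k / (2 * s)).
    set (q := - (4/9) * k / s^3).
    assert (HD1 : Derive (quadP (k*s) p q r 0) r = p).
    { rewrite (is_derive_unique _ _ _ (quad_derive (k*s) p q r 0 r)). simpl. ring. }
    assert (HD2 : Derive_n (quadP (k*s) p q r 0) 2 r = q).
    { rewrite quad_Derive_n. reflexivity. }
    exists r, (quadP (k*s) p q r 0).
    split; [lra|]. split; [apply quad_smooth|]. split.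
    + exists (3*u/4). split; [lra|]. intros y Hy Hyr.
      apply Rabs_def2 in Hyr.
      assert (Hyt : u/4 < y - t) by (unfold u in *; lra).
      assert (HFy := Hmin y ltac:(lra)).
      unfold F in HFy. rewrite !clamp_id in HFy by lra.
      fold u s in HFy.
      assert (Hlow := sqrt_lower u (y - t) Hu Hyt). fold s in Hlow.
      replace (y - t - u) with (y - r) in Hlow by (unfold u; ring).
      assert (E : k * (s + (y - r) / (2 * s) - 2 / 9 * (y - r) ^ 2 / s ^ 3)
                  = k*s + p*(y-r) + q/2*(y-r)^2) by (unfold p, q; field; lra).
      assert (Hlow2 : k*s + p*(y-r) + q/2*(y-r)^2 <= k * sqrt (y - t)).
      { rewrite <- E. apply Rmult_le_compat_l; lra. }
      unfold quadP. replace (r - r) with 0 by ring. lra.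
    + rewrite HD1, HD2. split.
      * assert (E1 : p - 1/(4*delta) = (3*sd - 2*s)/(8*sd*sd*s))
          by (unfold p, k; rewrite <- Hsd2; field; lra).
        assert (0 <= (3*sd - 2*s)/(8*sd*sd*s)).
        { unfold Rdiv. apply Rmult_le_pos; [lra|].
          left. apply Rinv_0_lt_compat. 
          apply Rmult_lt_0_compat; [|lra]. apply Rmult_lt_0_compat; lra. }
        lra.
      * assert (Hp2 : 0 < 1 + p^2) by (assert (0 <= p^2) by apply pow2_ge_0; lra).
        assert (E2 : q/(1+p^2) + 2*p = (q + 2*p*(1+p^2))/(1+p^2))
          by (field; lra).
        assert (E3 : q + 2*p*(1+p^2) = k/s^3 * (s*s + k*k/4 - 4/9))
          by (unfold p, q; field; lra).
        rewrite E3 in E2.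
        assert (0 <= (k/s^3 * (s*s + k*k/4 - 4/9))/(1+p^2)).
        { unfold Rdiv. apply Rmult_le_pos; [|left; apply Rinv_0_lt_compat; lra].
          apply Rmult_le_pos.
          - apply Rmult_le_pos; [lra|left; apply Rinv_0_lt_compat; apply pow_lt; lra].
          - nra. }
        lra.
  - exfalso.
    assert (Hno' : forall t x, 0 <= t <= tau -> t < x <= delta ->
              h t + k * sqrt (x - t) <= h x).
    { intros t x Ht Hx. apply Rnot_lt_le. intro Hl. apply Hno. exists t, x. auto. }
    destruct (INR_archimed tau 1 ltac:(lra)) as [n Hn].
    assert (Hn0 : 0 < INR n).
    { destruct n; [simpl in Hn; lra|]. apply lt_0_INR. lia. }
    set (d := tau / INR n).
    assert (Hd0 : 0 < d) by (unfold d; apply Rdiv_lt_0_compat; lra).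
    assert (Hnd : INR n * d = tau) by (unfold d; field; lra).
    assert (Hsdd : 0 <= sqrt d) by apply sqrt_pos.
    assert (Hind : forall j, (j <= n)%nat -> INR j * k * sqrt d <= h (INR j * d)).
    { induction j as [|j IH]; intros Hj.
      - simpl. rewrite !Rmult_0_l, H0. lra.
      - assert (Hjn : INR j + 1 <= INR n) by (rewrite <- S_INR; apply le_INR; lia).
        assert (Hj0 : 0 <= INR j) by apply pos_INR.
        specialize (IH ltac:(lia)).
        assert (Hstep := Hno' (INR j * d) (INR (S j) * d)).
        rewrite S_INR in Hstep |- *.
        replace ((INR j + 1) * d - INR j * d) with d in Hstep by ring.
        assert (INR j * d + d <= tau) by nra.
        assert (0 <= INR j * d) by nra.
        assert (h (INR j * d) + k * sqrt d <= h ((INR j + 1) * d)).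
        { apply Hstep; nra. }
        nra. }
    specialize (Hind n (le_n n)). rewrite Hnd in Hind.
    assert (Hlt := Hsmall tau ltac:(lra)).
    assert (Hsq : sqrt d * sqrt d = d) by (apply sqrt_sqrt; lra).
    assert (Hns : 1 <= INR n * sqrt d).
    { apply Rnot_lt_le. intro Hc'.
      assert (0 <= INR n * sqrt d) by nra.
      assert ((INR n * sqrt d) * (INR n * sqrt d) < 1) by nra.
      assert ((INR n * sqrt d) * (INR n * sqrt d) = INR n * tau).
      { rewrite <- Hnd. replace (INR n * sqrt d * (INR n * sqrt d))
          with (INR n * INR n * (sqrt d * sqrt d)) by ring. rewrite Hsq. ring. }
      lra. }
    nra.
Qed.
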